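(* For any commutative ring $k$, the $k$-algebras $M_\infty$, $\Gamma$ and $\Sigma$ are flat as $k$-modules.
   Context: $\Gamma$ is the $k$-algebra of $\mathbb{N}\times\mathbb{N}$ matrices over $k$ with finitely many distinct entries and a uniform bound $n_A$ on the number of nonzero entries in each row and each column; $M_\infty\subset\Gamma$ is the two-sided ideal of matrices with finitely many nonzero entries; $\Sigma:=\Gamma/M_\infty$. *)

(* Defs.v *)
From Stdlib Require List.
From HB Require Import structures.
From mathcomp Require Import all_boot all_order all_algebra.
Set Implicit Arguments. Unset Strict Implicit. Unset Printing Implicit Defensive.
Import Order.TTheory GRing.Theory Num.Theory.
Local Open Scope ring_scope.

Section Defs.
Variable k : comPzRingType.

Definition infmx := nat -> nat -> k.
Definition mxadd (A B : infmx) : infmx := fun i j => A i j + B i j.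
Definition mxscale (a : k) (A : infmx) : infmx := fun i j => a * A i j.
Definition mxzero : infmx := fun _ _ => 0.

(* Gamma: finitely many distinct entries, and a uniform bound n_A on the
   number of nonzero entries in each row and in each column. *)
Definition in_Gamma (A : infmx) : Prop :=
  (exists s : seq k, forall i j, A i j \in s) /\
  (exists nA : nat,
     (forall i (s : seq nat), uniq s -> (forall j, j \in s -> A i j != 0) ->
        (size s <= nA)%N) /\
     (forall j (s : seq nat), uniq s -> (forall i, i \in s -> A i j != 0) ->
        (size s <= nA)%N)).

Definition in_Minf (A : infmx) : Prop :=
  exists s : seq (nat * nat), forall i j, A i j != 0 -> (i, j) \in s.

Definition is_zeromx (A : infmx) : Prop := forall i j, A i j = 0.

(* k-bilinear maps  N x (P/Q) -> X, where P/Q is the subquotient of the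
   k-module infmx given by submodules Q <= P; such maps are represented by
   functions N -> infmx -> X which are linear in the first argument, linear in
   the second argument on P, and vanish when the second argument lies in Q. *)
Definition bilin_on (P Q : infmx -> Prop) (N X : lmodType k)
    (B : N -> infmx -> X) : Prop :=
  (forall (v : infmx), P v -> forall (a : k) (n1 n2 : N),
      B (a *: n1 + n2) v = a *: B n1 v + B n2 v) /\
  (forall (n : N) (a : k) (v1 v2 : infmx), P v1 -> P v2 ->
      B n (mxadd (mxscale a v1) v2) = a *: B n v1 + B n v2) /\
  (forall (n : N) (v : infmx), Q v -> B n v = 0).

(* The element  sum_{p in s} p.1 (x) [p.2]  of the tensor product N (x)_k (P/Q)
   is zero.  An element of a tensor product is zero iff it is killed by every
   bilinear map (the tensor product being the universal bilinear target). *)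
Definition tensor_zero (P Q : infmx -> Prop) (N : lmodType k)
    (s : seq (N * infmx)) : Prop :=
  forall (X : lmodType k) (B : N -> infmx -> X), bilin_on P Q B ->
    \sum_(p <- s) B p.1 p.2 = 0.

Definition flat_subquot (P Q : infmx -> Prop) : Prop :=
  forall (N' N : lmodType k) (f : {linear N' -> N}), injective f ->
  forall s : seq (N' * infmx), (forall p, List.In p s -> P p.2) ->
    tensor_zero P Q [seq (f p.1, p.2) | p <- s] -> tensor_zero P Q s.

End Defs.

(* Main.v *)
Require Import Defs.
From HB Require Import structures.
From mathcomp Require Import all_boot all_order all_algebra.
From Stdlib Require Import ClassicalEpsilon FunctionalExtensionality PropExtensionality ProofIrrelevance.
Set Implicit Arguments. Unset Strict Implicit. Unset Printing Implicit Defensive.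
Import Order.TTheory GRing.Theory Num.Theory.
Local Open Scope ring_scope.

Lemma In_in (T : eqType) (x : T) s : List.In x s -> x \in s.
Proof. elim: s => //= y s IH [->|H]; rewrite inE; first by rewrite eqxx.
by rewrite IH ?orbT. Qed.
Lemma in_In (T : eqType) (x : T) s : x \in s -> List.In x s.
Proof. elim: s => //= y s IH; rewrite inE => /orP[/eqP->|H]; [by left|right; exact: IH]. Qed.

Lemma eq_big_In (R : nmodType) (I : Type) (r : seq I) (F G : I -> R) :
  (forall i, List.In i r -> F i = G i) -> \sum_(i <- r) F i = \sum_(i <- r) G i.
Proof.
elim: r => [|i r IH] H; first by rewrite !big_nil.
by rewrite !big_cons H /= ?IH //; [move=> j Hj; apply: H; right | left].
Qed.

Section Gen.
Variable k : comPzRingType.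
Implicit Types (vs : seq (infmx k)).

Definition tau vs (x : nat * nat) : seq k := [seq v x.1 x.2 | v <- vs].
Definition nzt (t : seq k) : bool := ~~ all (fun a => a == 0) t.
Definition Emx vs (t : seq k) : infmx k := fun i j => if tau vs (i, j) == t then 1 else 0.
Definition rep vs (t : seq k) : nat * nat :=
  match excluded_middle_informative (exists x, tau vs x = t) with
  | left H => proj1_sig (constructive_indefinite_description _ H)
  | right _ => (0%N, 0%N) end.

Lemma rep_spec vs x : tau vs (rep vs (tau vs x)) = tau vs x.
Proof.
rewrite /rep; case: excluded_middle_informative => [H|H]; last by case: H; exists x.
by case: constructive_indefinite_description.
Qed.

Lemma tau_comp vs v x y : List.In v vs -> tau vs x = tau vs y -> v x.1 x.2 = v y.1 y.2.
Proof.
elim: vs => //= w vs IH [->|Hv] [E1 E2]; first by [].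
exact: IH.
Qed.

Lemma tau_mem vs v x : List.In v vs -> v x.1 x.2 \in tau vs x.
Proof.
elim: vs => //= w vs IH [->|Hv]; rewrite inE; first by rewrite eqxx.
by rewrite (IH Hv) orbT.
Qed.

Lemma T0_ex vs : (forall v, List.In v vs -> exists l : seq k, forall i j, v i j \in l) ->
  exists T0 : seq (seq k), forall x, tau vs x \in T0.
Proof.
elim: vs => [|v vs IH] H; first by exists [:: [::]]; move=> x; rewrite inE.
have [l Hl] := H v (or_introl erefl).
have [T0 HT] := IH (fun w Hw => H w (or_intror Hw)).
exists [seq a :: t | a <- l, t <- T0] => x.
exact: (allpairs_f (fun a t => a :: t) (Hl x.1 x.2) (HT x)).
Qed.

Definition msum (l : seq (k * infmx k)) : infmx k :=
  foldr (fun q acc => mxadd (mxscale q.1 q.2) acc) (@mxzero k) l.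

Lemma msumE l i j : msum l i j = \sum_(q <- l) q.1 * q.2 i j.
Proof. elim: l => [|q l IH]; by rewrite ?big_nil ?big_cons //= /mxadd /mxscale IH. Qed.

Variables (P Q : infmx k -> Prop).
Hypothesis HP0 : P (@mxzero k).
Hypothesis HQ0 : Q (@mxzero k).
Hypothesis HPlin : forall a v1 v2, P v1 -> P v2 -> P (mxadd (mxscale a v1) v2).
Hypothesis HPvals : forall v, P v -> exists l : seq k, forall i j, v i j \in l.
Hypothesis HPE : forall vs, (forall v, List.In v vs -> P v) -> forall t, nzt t -> P (Emx vs t).
Hypothesis Hkey : forall (N' N : lmodType k) (f : {linear N' -> N}), injective f ->
  forall s : seq (N' * infmx k), (forall p, List.In p s -> P p.2) ->
  tensor_zero P Q [seq (f p.1, p.2) | p <- s] -> forall t, nzt t ->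
  \sum_(p <- s) p.2 (rep (map snd s) t).1 (rep (map snd s) t).2 *: p.1 = 0
  \/ Q (Emx (map snd s) t).

Section B.
Variables (N : lmodType k) (X : lmodType k) (B : N -> infmx k -> X).
Hypothesis HB : bilin_on P Q B.

Lemma B0l v : P v -> B 0 v = 0.
Proof.
case: HB => H1 _ Pv; have := H1 v Pv 1 0 0; rewrite !scale1r addr0 => /(congr1 (fun x => x - B 0 v)).
by rewrite subrr addrK.
Qed.

Lemma BZl v a n : P v -> B (a *: n) v = a *: B n v.
Proof. case: HB => H1 _ Pv; by rewrite -[a *: n]addr0 H1 // B0l // addr0. Qed.

Lemma Bsuml v (I : Type) (r : seq I) (F : I -> N) : P v ->
  B (\sum_(i <- r) F i) v = \sum_(i <- r) B (F i) v.
Proof.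
case: HB => H1 _ Pv; elim: r => [|i r IH]; first by rewrite !big_nil B0l.
rewrite !big_cons -IH; have := H1 v Pv 1 (F i) (\sum_(j <- r) F j).
by rewrite !scale1r.
Qed.

Lemma Bmsum n l : (forall q, List.In q l -> P q.2) ->
  P (msum l) /\ B n (msum l) = \sum_(q <- l) q.1 *: B n q.2.
Proof.
case: HB => _ [H2 H3]; elim: l => [|q l IH] Hl /=.
  by rewrite big_nil; split => //; apply: H3.
have [Pl El] := IH (fun q' H => Hl q' (or_intror H)).
have Pq := Hl q (or_introl erefl).
split; first exact: HPlin.
by rewrite H2 // El big_cons.
Qed.
End B.

Lemma flat_gen : flat_subquot P Q.
Proof.
move=> N' N f finj s Ps H X B HB.
set vs := map snd s.
have Pvs : forall v, List.In v vs -> P v.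
  move=> v; rewrite /vs List.in_map_iff => -[p [<- Hp]]; exact: Ps.
have [T0 HT0] := T0_ex (fun v Hv => HPvals (Pvs v Hv)).
set T := undup [seq t <- T0 | nzt t].
have HTnz : forall t, t \in T -> nzt t by move=> t; rewrite mem_undup mem_filter => /andP[].
have PE : forall t, List.In t T -> P (Emx vs t).
  by move=> t Ht; apply: HPE => //; apply: HTnz; exact: In_in.
pose dec (v : infmx k) : seq (k * infmx k) := [seq (v (rep vs t).1 (rep vs t).2, Emx vs t) | t <- T].
have Pdec : forall v q, List.In q (dec v) -> P q.2.
  move=> v q; rewrite /dec List.in_map_iff => -[t [<- Ht]]; exact: PE.
have decE : forall v, List.In v vs -> v = msum (dec v).
  move=> v Hv; apply: functional_extensionality => i; apply: functional_extensionality => j.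
  rewrite msumE /dec big_map.
  case: (boolP (nzt (tau vs (i, j)))) => Hnz.
    have Tin : tau vs (i, j) \in T by rewrite mem_undup mem_filter Hnz HT0.
    rewrite (bigD1_seq _ Tin (undup_uniq _)) /= big1 => [|t /negbTE Ht].
      rewrite /Emx eqxx mulr1 addr0.
      exact: (tau_comp (x := (i, j)) Hv (esym (rep_spec vs (i, j)))).
    by rewrite /Emx eq_sym Ht mulr0.
  rewrite big_seq big1 => [|t Ht].
    have := tau_mem (i, j) Hv; move: Hnz; rewrite /nzt negbK => /allP Ha /Ha.
    by move/eqP.
  rewrite /Emx /=; case: ifP => [/eqP E|_]; last by rewrite mulr0.
  by move: (HTnz t Ht); rewrite -E (negbTE Hnz).
have Bdec : forall p, List.In p s ->
   B p.1 p.2 = \sum_(t <- T) B (p.2 (rep vs t).1 (rep vs t).2 *: p.1) (Emx vs t).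
  move=> p Hp.
  have Hv : List.In p.2 vs by rewrite /vs; apply: List.in_map.
  rewrite [in LHS](decE _ Hv).
  have [_ ->] := @Bmsum _ _ _ HB p.1 _ (Pdec p.2).
  rewrite /dec /= big_map; apply: eq_big_seq => t Ht /=.
  by rewrite (BZl HB) //; apply: PE; apply: in_In.
rewrite (eq_big_In (G := fun p : N' * infmx k => \sum_(t <- T) B (p.2 (rep vs t).1 (rep vs t).2 *: p.1) (Emx vs t))); last first.
  by move=> p Hp; apply: Bdec.
rewrite exchange_big big_seq big1 // => t Ht.
have Ht' := in_In Ht.
rewrite -(Bsuml HB _ _ (PE t Ht')).
case: (Hkey finj Ps H (HTnz t Ht)) => [E|HQ].
  by rewrite (_ : \sum_(i <- s) _ = 0); [exact: (B0l HB (PE t Ht')) | exact: E].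
by case: HB => _ [_ ->].
Qed.
End Gen.

Section P2.
Variable k : comPzRingType.
Implicit Types (vs : seq (infmx k)).

Lemma nzt_tau vs x : nzt (tau vs x) -> exists v, List.In v vs /\ v x.1 x.2 != 0.
Proof.
elim: vs => //= w vs IH; rewrite /nzt /= negb_and => /orP[H|H].
  by exists w; split; [left|].
by have [v [Hv Hv0]] := IH H; exists v; split; [right|].
Qed.

Lemma Emx_nz vs t i j : nzt t -> Emx vs t i j != 0 -> exists v, List.In v vs /\ v i j != 0.
Proof.
rewrite /Emx; case: ifP => [/eqP E|]; last by rewrite eqxx.
by move=> Ht _; rewrite -E in Ht; exact: (nzt_tau Ht).
Qed.

Lemma Emx_vals vs t i j : Emx vs t i j \in [:: 0; 1].
Proof. by rewrite /Emx; case: ifP; rewrite !inE eqxx ?orbT. Qed.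

Lemma has_In vs v i j : List.In v vs -> v i j != 0 -> has (fun w => w i j != 0) vs.
Proof. elim: vs => //= w vs IH [<-|Hv] Hnz; first by rewrite Hnz. by rewrite IH ?orbT. Qed.

Lemma Minf0 : in_Minf (@mxzero k).
Proof. by exists [::] => i j; rewrite eqxx. Qed.
Lemma zero0 : is_zeromx (@mxzero k).
Proof. by []. Qed.

Lemma Minf_lin a v1 v2 : in_Minf v1 -> in_Minf v2 -> @in_Minf k (mxadd (mxscale a v1) v2).
Proof.
move=> [l1 H1] [l2 H2]; exists (l1 ++ l2) => i j; rewrite /mxadd /mxscale mem_cat.
case: (boolP (v1 i j == 0)) => [/eqP->|/H1->//]; rewrite mulr0 add0r => /H2 ->.
by rewrite orbT.
Qed.

Lemma Minf_vals v : in_Minf v -> exists l : seq k, forall i j, v i j \in l.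
Proof.
move=> [l H]; exists (0 :: [seq v q.1 q.2 | q <- l]) => i j; rewrite inE.
case: (boolP (v i j == 0)) => //= /H Hin.
by apply/mapP; exists (i, j).
Qed.

Lemma Minf_E vs : (forall v, List.In v vs -> in_Minf v) -> forall t, nzt t -> @in_Minf k (Emx vs t).
Proof.
move=> Hvs t Ht.
suff [l Hl] : exists l : seq (nat * nat), forall i j, (exists v, List.In v vs /\ v i j != 0) -> (i, j) \in l.
  by exists l => i j /(Emx_nz Ht) /Hl.
elim: vs Hvs {Ht} => [|w vs IH] Hvs; first by exists [::] => i j [v []].
have [l1 H1] := Hvs w (or_introl erefl).
have [l2 H2] := IH (fun v Hv => Hvs v (or_intror Hv)).
exists (l1 ++ l2) => i j [v [[<-|Hv] Hnz]]; rewrite mem_cat.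
  by rewrite H1.
by rewrite H2 ?orbT //; exists v.
Qed.

Definition bound (p : nat -> pred nat) (n : nat) :=
  forall i (s : seq nat), uniq s -> (forall j, j \in s -> p i j) -> (size s <= n)%N.

Lemma bound_mono (p q : nat -> pred nat) n : (forall i j, q i j -> p i j) -> bound p n -> bound q n.
Proof. move=> Hqp Hp i s Us Hs; apply: Hp Us _ => j /Hs; exact: Hqp. Qed.

Lemma bound_split (p1 p2 : nat -> pred nat) n1 n2 : bound p1 n1 -> bound p2 n2 ->
  bound (fun i j => p1 i j || p2 i j) (n1 + n2).
Proof.
move=> H1 H2 i s Us Hs.
rewrite -(count_predC (p1 i)) -!size_filter leq_add //.
  apply: (H1 i) (filter_uniq _ Us) _ => j; rewrite mem_filter => /andP[].
  by move=> ? _.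
apply: (H2 i) (filter_uniq _ Us) _ => j; rewrite mem_filter => /andP[/= Hn /Hs].
by rewrite (negbTE Hn).
Qed.

Lemma bound0 (p : nat -> pred nat) : (forall i j, ~~ p i j) -> bound p 0.
Proof. move=> Hp i [|j s] //= _ /(_ j); rewrite inE eqxx => /(_ isT); by rewrite (negbTE (Hp _ _)). Qed.

Lemma Gamma_intro (A : infmx k) (l : seq k) n :
  (forall i j, A i j \in l) -> bound (fun i j => A i j != 0) n -> bound (fun j i => A i j != 0) n ->
  in_Gamma A.
Proof. by move=> Hl Hr Hc; split; [exists l | exists n]. Qed.

Lemma Gamma_elim (A : infmx k) : in_Gamma A ->
  exists n, bound (fun i j => A i j != 0) n /\ bound (fun j i => A i j != 0) n.
Proof. by move=> [_ [n [Hr Hc]]]; exists n. Qed.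

Lemma Gamma0 : in_Gamma (@mxzero k).
Proof.
apply: (@Gamma_intro _ [:: 0] 0%N); first by move=> i j; rewrite inE.
  by apply: bound0 => i j; rewrite /mxzero eqxx.
by apply: bound0 => i j; rewrite /mxzero eqxx.
Qed.

Lemma Gamma_lin a v1 v2 : in_Gamma v1 -> in_Gamma v2 -> @in_Gamma k (mxadd (mxscale a v1) v2).
Proof.
move=> G1 G2; have [[l1 Hl1] _] := G1; have [[l2 Hl2] _] := G2.
have [n1 [R1 C1]] := Gamma_elim G1; have [n2 [R2 C2]] := Gamma_elim G2.
have Hor : forall i j, mxadd (mxscale a v1) v2 i j != 0 -> (v1 i j != 0) || (v2 i j != 0).
  move=> i j; rewrite /mxadd /mxscale.
  case: (boolP (v1 i j == 0)) => [/eqP->|//]; by rewrite mulr0 add0r.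
apply: (@Gamma_intro _ [seq a * x + y | x <- l1, y <- l2] (n1 + n2)).
- move=> i j; exact: (allpairs_f (fun x y => a * x + y) (Hl1 i j) (Hl2 i j)).
- apply: bound_mono (bound_split R1 R2) => i j; exact: Hor.
- apply: bound_mono (bound_split C1 C2) => j i; exact: Hor.
Qed.

Lemma Gamma_vals v : in_Gamma v -> exists l : seq k, forall i j, v i j \in l.
Proof. by case. Qed.

Lemma Gamma_E vs : (forall v, List.In v vs -> in_Gamma v) -> forall t, nzt t -> @in_Gamma k (Emx vs t).
Proof.
move=> Hvs t Ht.
suff [n [Hr Hc]] : exists n, bound (fun i j => has (fun v => v i j != 0) vs) n /\
                              bound (fun j i => has (fun v => v i j != 0) vs) n.
  have Hh : forall i j, Emx vs t i j != 0 -> has (fun v => v i j != 0) vs.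
    move=> i j /(Emx_nz Ht) [v [Hv Hnz]]; exact: has_In Hv Hnz.
  apply: (@Gamma_intro _ [:: 0; 1] n); first exact: Emx_vals.
    by apply: bound_mono Hr => i j; exact: Hh.
  by apply: bound_mono Hc => j i; exact: Hh.
elim: vs Hvs {Ht} => [|w vs IH] Hvs.
  by exists 0%N; split; apply: bound0.
have [n1 [R1 C1]] := Gamma_elim (Hvs w (or_introl erefl)).
have [n2 [R2 C2]] := IH (fun v Hv => Hvs v (or_intror Hv)).
by exists (n1 + n2)%N; split; [exact: bound_split R1 R2 | exact: bound_split C1 C2].
Qed.

Lemma Hkey0 (P : infmx k -> Prop) (N' N : lmodType k) (f : {linear N' -> N}) :
  injective f ->
  forall s : seq (N' * infmx k), (forall p, List.In p s -> P p.2) ->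
  tensor_zero P (@is_zeromx k) [seq (f p.1, p.2) | p <- s] -> forall t, nzt t ->
  \sum_(p <- s) p.2 (rep (map snd s) t).1 (rep (map snd s) t).2 *: p.1 = 0
  \/ is_zeromx (Emx (map snd s) t).
Proof.
move=> finj s Ps H t Ht; left.
set r := rep (map snd s) t.
pose B := fun (n : N) (v : infmx k) => v r.1 r.2 *: n.
have HB : bilin_on P (@is_zeromx k) B.
  split; first by move=> v _ a n1 n2; rewrite /B scalerDr !scalerA mulrC.
  split; first by move=> n a v1 v2 _ _; rewrite /B /mxadd /mxscale scalerDl scalerA.
  by move=> n v Hv; rewrite /B Hv scale0r.
have := H N B HB; rewrite big_map /B /= => E.
apply: finj; rewrite linear0 linear_sum -[RHS]E; apply: eq_bigr => p _.
by rewrite linearZ.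
Qed.
End P2.


Section Quot.
Variable k : comPzRingType.
Variable N : lmodType k.

Definition V := nat -> nat -> N.
Definition vadd (g h : V) : V := fun i j => g i j + h i j.
Definition vopp (g : V) : V := fun i j => - g i j.
Definition vscale (a : k) (g : V) : V := fun i j => a *: g i j.
Definition vzero : V := fun _ _ => 0.

Definition fin (g : V) := exists l : seq (nat * nat), forall i j, g i j != 0 -> (i, j) \in l.
Definition eqv (g h : V) := fin (fun i j => g i j - h i j).

Lemma fin_ext (g : V) : (forall i j, g i j = 0) -> fin g.
Proof. by move=> H; exists [::] => i j; rewrite H eqxx. Qed.

Lemma fin_add (g h : V) : fin g -> fin h -> fin (vadd g h).
Proof.
move=> [l1 H1] [l2 H2]; exists (l1 ++ l2) => i j; rewrite /vadd mem_cat.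
case: (boolP (g i j == 0)) => [/eqP->|/H1->//]; rewrite add0r => /H2 ->.
by rewrite orbT.
Qed.

Lemma fin_scale a (g : V) : fin g -> fin (vscale a g).
Proof.
move=> [l H]; exists l => i j; rewrite /vscale.
by case: (boolP (g i j == 0)) => [/eqP->|/H//]; rewrite scaler0 eqxx.
Qed.

Lemma fin_eq (g h : V) : (forall i j, g i j = h i j) -> fin g -> fin h.
Proof. by move=> E [l H]; exists l => i j; rewrite -E; exact: H. Qed.

Lemma eqv_ext (g h : V) : (forall i j, g i j = h i j) -> eqv g h.
Proof. by move=> E; apply: fin_ext => i j; rewrite E subrr. Qed.

Lemma eqv_refl g : eqv g g. Proof. exact: eqv_ext. Qed.

Lemma eqv_sym g h : eqv g h -> eqv h g.
Proof.
move=> H; apply: fin_eq (fin_scale (-1) H) => i j.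
by rewrite /vscale scaleN1r opprB.
Qed.

Lemma eqv_trans g h u : eqv g h -> eqv h u -> eqv g u.
Proof.
move=> H1 H2; apply: fin_eq (fin_add H1 H2) => i j.
by rewrite /vadd addrA subrK.
Qed.

Lemma eqv_add g1 g2 h1 h2 : eqv g1 h1 -> eqv g2 h2 -> eqv (vadd g1 g2) (vadd h1 h2).
Proof.
move=> H1 H2; apply: fin_eq (fin_add H1 H2) => i j.
by rewrite /vadd opprD addrACA.
Qed.

Lemma eqv_opp g h : eqv g h -> eqv (vopp g) (vopp h).
Proof.
move=> H; apply: fin_eq (fin_scale (-1) H) => i j.
by rewrite /vscale /vopp scaleN1r opprB addrC opprK.
Qed.

Lemma eqv_scale a g h : eqv g h -> eqv (vscale a g) (vscale a h).
Proof.
move=> H; apply: fin_eq (fin_scale a H) => i j.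
by rewrite /vscale scalerBr.
Qed.

Definition canon (g : V) : V :=
  proj1_sig (constructive_indefinite_description (fun h => eqv h g) (ex_intro (fun h => eqv h g) g (eqv_refl g))).

Lemma canon_eqv g : eqv (canon g) g.
Proof. by rewrite /canon; case: constructive_indefinite_description. Qed.

Lemma cid_eq (Pr Qr : V -> Prop) (HP : exists x, Pr x) (HQ : exists x, Qr x) :
  Pr = Qr -> proj1_sig (constructive_indefinite_description _ HP) =
             proj1_sig (constructive_indefinite_description _ HQ).
Proof. move=> E; subst Qr; by rewrite (proof_irrelevance _ HP HQ). Qed.

Lemma canon_eq g h : eqv g h -> canon g = canon h.
Proof.
move=> E; apply: cid_eq; apply: functional_extensionality => u.
apply: propositional_extensionality; split => H.
  exact: eqv_trans H E.
exact: eqv_trans H (eqv_sym E).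
Qed.

Definition X := {g : V | canon g = g}.
Definition mk (g : V) : X := exist _ (canon g) (canon_eq (canon_eqv g)).
Definition xval (x : X) : V := proj1_sig x.

Lemma X_eq (x y : X) : xval x = xval y -> x = y.
Proof. by case: x => x px; case: y => y py /= E; apply: subset_eq_compat. Qed.

Lemma val_mk g : eqv (xval (mk g)) g.
Proof. exact: canon_eqv. Qed.

Lemma mk_eq g h : eqv g h -> mk g = mk h.
Proof. by move=> E; apply: X_eq; rewrite /= (canon_eq E). Qed.

Lemma mk_val x : mk (xval x) = x.
Proof. by apply: X_eq; case: x. Qed.

Lemma mk_fin g : mk g = mk vzero -> fin g.
Proof.
move=> E; have : canon g = canon vzero by move: (congr1 xval E).
move=> E'; have H := eqv_trans (eqv_sym (canon_eqv g)) (eqv_trans (eq_ind _ (fun u => eqv u (canon vzero)) (eqv_refl _) _ (esym E')) (canon_eqv vzero)).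
by apply: fin_eq H => i j; rewrite /vzero subr0.
Qed.

Definition Xeqb (x y : X) : bool := if excluded_middle_informative (x = y) then true else false.
Lemma Xeqb_axiom : Equality.axiom Xeqb.
Proof. move=> x y; rewrite /Xeqb; case: excluded_middle_informative => H; by constructor. Qed.
HB.instance Definition _ := hasDecEq.Build X Xeqb_axiom.

Definition Xfind (Pr : pred X) (n : nat) : option X :=
  match excluded_middle_informative (exists x, Pr x) with
  | left H => Some (proj1_sig (constructive_indefinite_description _ H))
  | right _ => None end.
Lemma Xfind_correct Pr n x : Xfind Pr n = Some x -> Pr x.
Proof.
rewrite /Xfind; case: excluded_middle_informative => // H [<-].
by case: constructive_indefinite_description.
Qed.
Lemma Xfind_complete (Pr : pred X) : (exists x, Pr x) -> exists n, Xfind Pr n.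
Proof. by move=> H; exists 0%N; rewrite /Xfind; case: excluded_middle_informative. Qed.
Lemma Xfind_ext (Pr Qr : pred X) : Pr =1 Qr -> Xfind Pr =1 Xfind Qr.
Proof. by move=> E; rewrite (functional_extensionality _ _ E). Qed.
HB.instance Definition _ := hasChoice.Build X Xfind_correct Xfind_complete Xfind_ext.

Definition xzero : X := mk vzero.
Definition xadd (x y : X) : X := mk (vadd (xval x) (xval y)).
Definition xopp (x : X) : X := mk (vopp (xval x)).
Definition xscale (a : k) (x : X) : X := mk (vscale a (xval x)).

Lemma xaddE g h : xadd (mk g) (mk h) = mk (vadd g h).
Proof. by apply: mk_eq; apply: eqv_add; apply: val_mk. Qed.
Lemma xoppE g : xopp (mk g) = mk (vopp g).
Proof. by apply: mk_eq; apply: eqv_opp; apply: val_mk. Qed.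
Lemma xscaleE a g : xscale a (mk g) = mk (vscale a g).
Proof. by apply: mk_eq; apply: eqv_scale; apply: val_mk. Qed.

Lemma xaddA : associative xadd.
Proof.
move=> x y z; rewrite -(mk_val x) -(mk_val y) -(mk_val z) !xaddE.
by apply: mk_eq; apply: eqv_ext => i j; rewrite /vadd addrA.
Qed.
Lemma xaddC : commutative xadd.
Proof.
move=> x y; rewrite -(mk_val x) -(mk_val y) !xaddE.
by apply: mk_eq; apply: eqv_ext => i j; rewrite /vadd addrC.
Qed.
Lemma xadd0 : left_id xzero xadd.
Proof.
move=> x; rewrite -(mk_val x) /xzero !xaddE.
by apply: mk_eq; apply: eqv_ext => i j; rewrite /vadd /vzero add0r.
Qed.
Lemma xaddN : left_inverse xzero xopp xadd.
Proof.
move=> x; rewrite -(mk_val x) /xzero xoppE xaddE.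
by apply: mk_eq; apply: eqv_ext => i j; rewrite /vadd /vzero /vopp addNr.
Qed.
HB.instance Definition _ := GRing.isZmodule.Build X xaddA xaddC xadd0 xaddN.

Lemma xscaleA a b (x : X) : xscale a (xscale b x) = xscale (a * b) x.
Proof.
rewrite -(mk_val x) !xscaleE.
by apply: mk_eq; apply: eqv_ext => i j; rewrite /vscale scalerA.
Qed.
Lemma xscale1 : left_id 1 xscale.
Proof.
move=> x; rewrite -(mk_val x) !xscaleE.
by apply: mk_eq; apply: eqv_ext => i j; rewrite /vscale scale1r.
Qed.
Lemma xscaleDr : right_distributive xscale xadd.
Proof.
move=> a x y; rewrite -(mk_val x) -(mk_val y).
rewrite !xaddE !xscaleE ?xaddE !mk_val.
by apply: mk_eq; apply: eqv_ext => i j; rewrite /vscale /vadd scalerDr.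
Qed.
Lemma xscaleDl (x : X) : {morph xscale^~ x : a b / a + b >-> xadd a b}.
Proof.
move=> a b; rewrite -(mk_val x) !xscaleE xaddE.
by apply: mk_eq; apply: eqv_ext => i j; rewrite /vscale /vadd scalerDl.
Qed.
HB.instance Definition _ := GRing.Zmodule_isLmodule.Build k X xscaleA xscale1 xscaleDr xscaleDl.

End Quot.


Section S4.
Variable k : comPzRingType.

Section Q.
Variable N : lmodType k.
Lemma mk_add (g h : V N) : (mk g + mk h : X N) = mk (vadd g h).
Proof. exact: xaddE. Qed.
Lemma mk_scale a (g : V N) : (a *: mk g : X N) = mk (vscale a g).
Proof. exact: xscaleE. Qed.
Lemma mk0 : (0 : X N) = mk (@vzero _ N).
Proof. by []. Qed.
Lemma mk_sum (I : Type) (r : seq I) (F : I -> V N) :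
  \sum_(p <- r) mk (F p) = mk (fun i j => \sum_(p <- r) F p i j).
Proof.
elim: r => [|p r IH]; first by rewrite big_nil mk0; apply: mk_eq; apply: eqv_ext => i j; rewrite big_nil.
by rewrite big_cons IH mk_add; apply: mk_eq; apply: eqv_ext => i j; rewrite /vadd big_cons.
Qed.
End Q.

Lemma HkeyS (N' N : lmodType k) (f : {linear N' -> N}) :
  injective f ->
  forall s : seq (N' * infmx k), (forall p, List.In p s -> @in_Gamma k p.2) ->
  tensor_zero (@in_Gamma k) (@in_Minf k) [seq (f p.1, p.2) | p <- s] -> forall t, nzt t ->
  \sum_(p <- s) p.2 (rep (map snd s) t).1 (rep (map snd s) t).2 *: p.1 = 0
  \/ in_Minf (Emx (map snd s) t).
Proof.
move=> finj s Ps H t Ht.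
set vs := map snd s.
case: (classic (exists l : seq (nat * nat), forall i j, tau vs (i, j) = t -> (i, j) \in l)) => [[l Hl]|Hno].
  right; exists l => i j; rewrite /Emx; case: ifP => [/eqP E _|]; first exact: Hl.
  by rewrite eqxx.
left.
pose B := fun (n : N) (v : infmx k) => mk (fun i j => v i j *: n) : X N.
have HB : bilin_on (@in_Gamma k) (@in_Minf k) B.
  split.
    move=> v _ a n1 n2; rewrite /B mk_scale mk_add; apply: mk_eq; apply: eqv_ext => i j.
    by rewrite /vadd /vscale scalerDr !scalerA mulrC.
  split.
    move=> n a v1 v2 _ _; rewrite /B mk_scale mk_add; apply: mk_eq; apply: eqv_ext => i j.
    by rewrite /vadd /vscale /mxadd /mxscale scalerDl scalerA.
  move=> n v [l Hl]; rewrite /B mk0; apply: mk_eq; exists l => i j.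
  rewrite /vzero subr0; case: (boolP (v i j == 0)) => [/eqP->|/Hl//]; by rewrite scale0r eqxx.
have := H _ B HB; rewrite big_map /B /= mk_sum mk0 => /mk_fin [l Hl].
set r := rep vs t.
have fc : forall i j, tau vs (i, j) = t ->
   \sum_(p <- s) p.2 i j *: f p.1 = f (\sum_(p <- s) p.2 r.1 r.2 *: p.1).
  move=> i j E; rewrite linear_sum; apply: eq_big_In => p Hp.
  rewrite linearZ /=; congr (_ *: _).
  have Hv : List.In p.2 vs by rewrite /vs; apply: List.in_map.
  apply: (tau_comp (x := (i, j)) (y := r) Hv).
  by rewrite /r -E rep_spec.
apply: finj; rewrite linear0.
case: (boolP (f (\sum_(p <- s) p.2 r.1 r.2 *: p.1) == 0)) => [/eqP//|Hnz].
case: Hno; exists l => i j E; apply: Hl.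
by rewrite (fc i j E).
Qed.

End S4.

Theorem lemma3p9 (k : comPzRingType) :
  flat_subquot (@in_Minf k) (@is_zeromx k) /\
  flat_subquot (@in_Gamma k) (@is_zeromx k) /\
  flat_subquot (@in_Gamma k) (@in_Minf k).
Proof.
split; [|split].
- apply: flat_gen.
  + exact: Minf0.
  + exact: zero0.
  + exact: Minf_lin.
  + exact: Minf_vals.
  + exact: Minf_E.
  + move=> N' N f finj s Ps H t Ht; exact: (Hkey0 finj Ps H Ht).
- apply: flat_gen.
  + exact: Gamma0.
  + exact: zero0.
  + exact: Gamma_lin.
  + exact: Gamma_vals.
  + exact: Gamma_E.
  + move=> N' N f finj s Ps H t Ht; exact: (Hkey0 finj Ps H Ht).
- apply: flat_gen.
  + exact: Gamma0.
  + exact: Minf0.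
  + exact: Gamma_lin.
  + exact: Gamma_vals.
  + exact: Gamma_E.
  + move=> N' N f finj s Ps H t Ht; exact: (HkeyS finj Ps H Ht).
Qed.
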